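(* For an integer $q\ge 3$, let $\mathbf{mGT}_q$ be the subgroup of the group of permutations of the set $\mathbb{Z}/q\mathbb{Z}$ generated by (i) the multiplication maps $a\mapsto da$ for all $d\in(\mathbb{Z}/q\mathbb{Z})^*$, and (ii) the involution $\theta_q: a\mapsto 1-a$. For integers $p,q\ge 3$ with $p$ dividing $q$, let $t_{q,p}:\mathbb{Z}/q\mathbb{Z}\to\mathbb{Z}/p\mathbb{Z}$, $a \bmod q\mapsto a\bmod p$, be the reduction homomorphism. Then for every such $p\mid q$ and every $g\in\mathbf{mGT}_q$ there is a unique permutation $u_{q,p}(g)$ of $\mathbb{Z}/p\mathbb{Z}$ with $t_{q,p}\circ g=u_{q,p}(g)\circ t_{q,p}$; it lies in $\mathbf{mGT}_p$, and $g\mapsto u_{q,p}(g)$ is a group homomorphism $u_{q,p}:\mathbf{mGT}_q\to\mathbf{mGT}_p$. Moreover, whenever $p$ divides $q$ and $r$, and $q$ and $r$ divide $s$ (all $\ge 3$), one has $u_{q,p}\circ u_{s,q}=u_{r,p}\circ u_{s,r}=u_{s,p}$.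
   Context: $(\mathbb{Z}/q\mathbb{Z})^*$ denotes the multiplicative group of residue classes $d\bmod q$ with $\gcd(d,q)=1$. *)

(* Defs.v *)
From HB Require Import structures.
From mathcomp Require Import all_boot all_order all_algebra all_fingroup.
Set Implicit Arguments. Unset Strict Implicit. Unset Printing Implicit Defensive.
Import GRing.Theory.

(* Z/qZ is modelled by 'Z_q (only used for q >= 3, so 'Z_q really is Z/qZ). *)

Definition mGT_gens (q : nat) : {set {perm 'Z_q}} :=
  [set s : {perm 'Z_q} |
     [exists d : 'Z_q, (d \is a GRing.unit) && [forall a : 'Z_q, s a == (d * a)%R]]
  || [forall a : 'Z_q, s a == (1 - a)%R]].

Definition mGT (q : nat) : {group {perm 'Z_q}} := (<<mGT_gens q>>)%G.

Definition red (q p : nat) (a : 'Z_q) : 'Z_p := inZp (nat_of_ord a).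

(* u_{q,p}(g): the permutation h of Z/pZ with t o g = h o t (if one exists; 1 otherwise) *)
Definition u (q p : nat) (g : {perm 'Z_q}) : {perm 'Z_p} :=
  odflt 1%g [pick h : {perm 'Z_p} | [forall a : 'Z_q, red p (g a) == h (red p a)]].

(* Main.v *)
Require Import Defs.
From mathcomp Require Import all_boot all_order all_algebra all_fingroup.
Import GRing.Theory.
Local Open Scope ring_scope.

Section Red.
Variables (p q : nat) (hp : (1 < p)%N) (hq : (1 < q)%N) (pq : (p %| q)%N).

Lemma redE (a : 'Z_q) : red p a = (nat_of_ord a)%:R.
Proof. by rewrite /red Zp_nat. Qed.

Lemma red_nat m : red p (m%:R : 'Z_q) = m%:R.
Proof.
rewrite redE (val_Zp_nat hq).
rewrite {2}(divn_eq m q) natrD natrM.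
have -> : (q%:R : 'Z_p) = 0.
  by case/dvdnP: pq => k ->; rewrite natrM pchar_Zp // mulr0.
by rewrite mulr0 add0r.
Qed.

Lemma redM (a b : 'Z_q) : red p (a * b) = red p a * red p b.
Proof. by rewrite -(natr_Zp a) -(natr_Zp b) -natrM !red_nat natrM. Qed.

Lemma redD (a b : 'Z_q) : red p (a + b) = red p a + red p b.
Proof. by rewrite -(natr_Zp a) -(natr_Zp b) -natrD !red_nat natrD. Qed.

Lemma red1 : red p (1 : 'Z_q) = 1.
Proof. by exact: (red_nat 1). Qed.

Lemma red1B (a : 'Z_q) : red p (1 - a) = 1 - red p a.
Proof. by apply/eqP; rewrite eq_sym subr_eq -redD subrK red1. Qed.

Lemma red_surj (b : 'Z_p) : exists a : 'Z_q, red p a = b.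
Proof.
exists (nat_of_ord b)%:R; by rewrite red_nat natr_Zp.
Qed.

Definition liftable (g : {perm 'Z_q}) :=
  [exists h : {perm 'Z_p}, (h \in mGT p) && [forall a, red p (g a) == h (red p a)]].

Lemma liftable_group : group_set [set g | liftable g].
Proof.
apply/group_setP; split.
  rewrite inE; apply/existsP; exists 1%g; rewrite group1 /=.
  by apply/forallP => a; rewrite !perm1.
move=> g1 g2; rewrite !inE => /existsP[h1 /andP[H1 /forallP E1]]
  /existsP[h2 /andP[H2 /forallP E2]].
apply/existsP; exists (h1 * h2)%g; rewrite groupM //=.
apply/forallP => a; rewrite !permM.
by rewrite (eqP (E2 _)) (eqP (E1 _)).
Qed.

Lemma gens_liftable : mGT q \subset [set g | liftable g].
Proof.
rewrite /mGT /= (gen_subG _ (Group liftable_group)).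
apply/subsetP => s; rewrite inE => /orP[/existsP[d /andP[ud /forallP Es]]|/forallP Es];
  rewrite inE; apply/existsP.
- have ue : red p d \is a GRing.unit.
    apply/unitrP; exists (red p d^-1).
    by rewrite -!redM mulVr ?divrr // red1.
  exists (perm (mulrI ue)); apply/andP; split.
    apply: mem_gen; rewrite inE; apply/orP; left.
    apply/existsP; exists (red p d); rewrite ue /=.
    by apply/forallP => a; rewrite permE.
  by apply/forallP => a; rewrite permE (eqP (Es a)) redM.
- have inj : injective (fun a : 'Z_p => 1 - a) by apply: can_inj (subKr 1).
  exists (perm inj); apply/andP; split.
    apply: mem_gen; rewrite inE; apply/orP; right.
    by apply/forallP => a; rewrite permE.
  by apply/forallP => a; rewrite permE (eqP (Es a)) red1B.
Qed.

Lemma lift_unique (h1 h2 : {perm 'Z_p}) (g : {perm 'Z_q}) :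
  (forall a, red p (g a) = h1 (red p a)) ->
  (forall a, red p (g a) = h2 (red p a)) -> h1 = h2.
Proof.
move=> E1 E2; apply/permP => b; have [a <-] := red_surj b.
by rewrite -E1 -E2.
Qed.

Lemma u_spec (g : {perm 'Z_q}) : g \in mGT q ->
  (forall a, red p (g a) = u p g (red p a)) /\ u p g \in mGT p.
Proof.
move=> gin; have := subsetP gens_liftable g gin.
rewrite inE => /existsP[h /andP[hin /forallP E]].
rewrite /u; case: pickP => [h' /forallP E'|/(_ h)]; last first.
  by move/negP; case; apply/forallP.
have eq : h' = h by apply: (@lift_unique _ _ g) => a; [exact/eqP|exact/eqP].
by rewrite /= eq; split => // a; exact/eqP.
Qed.
End Red.

Lemma red_red p q s (hp : (1 < p)%N) (hq : (1 < q)%N) (pq : (p %| q)%N) (a : 'Z_s) :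
  red p (red q a) = red p a.
Proof. by rewrite (@redE q s a) red_nat // redE. Qed.

Lemma comp3 p q s (hp : (1 < p)%N) (hq : (1 < q)%N) (hs : (1 < s)%N)
  (pq : (p %| q)%N) (qs : (q %| s)%N) (g : {perm 'Z_s}) : g \in mGT s ->
  u p (u q g) = u p g.
Proof.
move=> gin; have [Eq inq] := u_spec q s hq hs qs _ gin.
have [Ep inp] := u_spec p q hp hq pq _ inq.
have [Eps _] := u_spec p s hp hs (dvdn_trans pq qs) _ gin.
apply: (@lift_unique p s hp hs (dvdn_trans pq qs) _ _ g) => // a.
by rewrite -(red_red p q s hp hq pq) Eq Ep red_red.
Qed.

Local Close Scope ring_scope.
Theorem proposition6p3 :
  (forall p q : nat, 3 <= p -> 3 <= q -> p %| q ->
     forall g : {perm 'Z_q}, g \in mGT q ->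
       (exists! h : {perm 'Z_p}, forall a : 'Z_q, red p (g a) = h (red p a))
       /\ (forall a : 'Z_q, red p (g a) = u p g (red p a))
       /\ u p g \in mGT p)
  /\ (forall p q : nat, 3 <= p -> 3 <= q -> p %| q ->
       forall g1 g2 : {perm 'Z_q}, g1 \in mGT q -> g2 \in mGT q ->
         u p (g1 * g2)%g = (u p g1 * u p g2)%g)
  /\ (forall p q r s : nat, 3 <= p -> 3 <= q -> 3 <= r -> 3 <= s ->
       p %| q -> p %| r -> q %| s -> r %| s ->
       forall g : {perm 'Z_s}, g \in mGT s ->
         u p (u q g) = u p g /\ u p (u r g) = u p g).
Proof.
split; [|split].
- move=> p q /ltnW hp /ltnW hq pq g gin.
  have [E inp] := u_spec p q hp hq pq _ gin.
  split=> //; exists (u p g); split=> // h Eh.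
  exact: (lift_unique p q hp hq pq _ _ _ E Eh).
- move=> p q /ltnW hp /ltnW hq pq g1 g2 in1 in2.
  have [E1 _] := u_spec p q hp hq pq _ in1.
  have [E2 _] := u_spec p q hp hq pq _ in2.
  have [E _] := u_spec p q hp hq pq _ (groupM in1 in2).
  apply: (lift_unique p q hp hq pq _ _ _ E) => a.
  by rewrite !permM E2 E1.
- move=> p q r s /ltnW hp /ltnW hq /ltnW hr /ltnW hs pq pr qs rs g gin.
  by split; apply: comp3.
Qed.
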